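(* Let $U\subseteq\mathbb R^2$ be a convex region and let $b$ be a line segment disjoint from $U$. Let $\varepsilon\ge 0$ and suppose the set $A:=\{\alpha\in[0,2\pi) : U(\alpha)\cap b(\alpha)\neq\emptyset\}$ has Lebesgue measure at most $2\pi-4\varepsilon$. Then $$\int_0^{2\pi}\lvert b(\alpha)\cap U(\alpha)\rvert\,\mathrm d\alpha \le 4\lvert b\rvert\cos\varepsilon .$$
   Context: For a set $X\subseteq\mathbb R^2$ and $\alpha\in[0,2\pi)$, $X(\alpha)=\{x\cos\alpha+y\sin\alpha:(x,y)\in X\}\subseteq\mathbb R$ is the projection of $X$ onto the line through the origin at angle $\alpha$; $\lvert\cdot\rvert$ on subsets of $\mathbb R$ is Lebesgue measure, and $\lvert b\rvert$ is the length of the segment $b$. *)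

(* Defs.v *)
From mathcomp Require Import all_boot all_order all_algebra.
From mathcomp Require Import all_classical all_reals all_analysis.
Set Implicit Arguments. Unset Strict Implicit. Unset Printing Implicit Defensive.
Import Order.TTheory GRing.Theory Num.Theory.
Local Open Scope classical_set_scope.
Local Open Scope ring_scope.

Definition dproj {R : realType} (X : set (R * R)) (a : R) : set R :=
  [set p.1 * cos a + p.2 * sin a | p in X].

Definition convex2 {R : realType} (U : set (R * R)) : Prop :=
  forall p q t, U p -> U q -> 0 <= t <= 1 ->
    U ((1 - t) * p.1 + t * q.1, (1 - t) * p.2 + t * q.2).

Definition segment {R : realType} (p q : R * R) : set (R * R) :=
  [set ((1 - t) * p.1 + t * q.1, (1 - t) * p.2 + t * q.2) | t in `[0, 1]].

Definition seglen {R : realType} (p q : R * R) : R :=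
  Num.sqrt ((q.1 - p.1) ^+ 2 + (q.2 - p.2) ^+ 2).

(* Main.v *)
Require Import Defs.
From mathcomp Require Import all_boot all_order all_algebra.
From mathcomp Require Import all_classical all_reals all_analysis.
From mathcomp Require Import ring lra.
Import Order.TTheory GRing.Theory Num.Theory.
Local Open Scope classical_set_scope.
Local Open Scope ring_scope.

Module Helpers.
Import numFieldNormedType.Exports.
Section S.
Import measurable_realfun.
Context {R : realType}.
Notation mu := (@lebesgue_measure R).

Lemma mu_le (A B : set R) : A `<=` B -> (mu A <= mu B)%E.
Proof. move=> AB. exact: le_mu_ext. Qed.

Import HBNNSimple.

Lemma partA (f : R -> \bar R) (H : R -> R) (A D : set R) (K z : R) :
  measurable D -> (0 <= K) -> (forall x, 0 <= H x) -> measurable_fun setT H ->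
  (forall x, (0 <= f x)%E) ->
  (forall x, D x -> (f x <= (H x + K)%:E)%E) ->
  (forall x, D x -> ~ A x -> x != z -> (f x <= (H x)%:E)%E) ->
  (\int[mu]_(x in D) f x <= \int[mu]_(x in D) (H x)%:E + K%:E * mu A)%E.
Proof.
move=> mD K0 H0 mH f0 fHK fH.
rewrite ge0_integralE//; apply: ge_ereal_sup => _ [h /= hf <-].
have hD x : ~ D x -> h x = 0.
  move=> nDx; apply/eqP; rewrite eq_le fun_ge0 andbT -lee_fin.
  by have := hf x; rewrite /patch; case: ifPn => //; rewrite inE.
have hf' x : D x -> ((h x)%:E <= f x)%E.
  by move=> Dx; have := hf x; rewrite /patch mem_set.
set S := (fun x => h x - H x) @^-1` `]0, +oo[.
have mS : measurable S.
  have : measurable_fun setT (fun x => h x - H x).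
    by apply: measurable_funB => //.
  by move=> /(_ measurableT _ (measurable_itv `]0, +oo[)); rewrite setTI.
rewrite -integralT_nnsfun.
have -> : (\int[mu]_x (h x)%:E = \int[mu]_(x in D) (h x)%:E)%E.
  rewrite [RHS]integral_mkcond; apply: eq_integral => x _.
  rewrite /patch; case: ifPn => // /negP; rewrite inE => /hD -> //.
apply: (@le_trans _ _ (\int[mu]_(x in D) ((H x)%:E + K%:E * (\1_S x)%:E))%E).
  apply: ge0_le_integral => //.
  - by move=> x _; rewrite lee_fin.
  - by apply/measurable_EFinP; exact: measurable_funTS.
  - apply: emeasurable_funD.
      by apply/measurable_EFinP; exact: measurable_funTS.
    apply: emeasurable_funM; first exact: measurable_cst.
    by apply/measurable_EFinP; exact: measurable_indic.
  move=> x Dx; rewrite /indic; case: (boolP (x \in S)) => xS.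
    by rewrite mule1 (le_trans (hf' x Dx)) ?fHK.
  rewrite mule0 adde0 lee_fin.
  move: xS; rewrite notin_setE /S /= in_itv /= andbT subr_gt0 => /negP.
  by rewrite -leNgt.
rewrite ge0_integralD//; last 4 first.
- by move=> x _; rewrite lee_fin.
- by apply/measurable_EFinP; exact: measurable_funTS.
- by move=> x _; rewrite mule_ge0// lee_fin.
- apply: emeasurable_funM; first exact: measurable_cst.
  by apply/measurable_EFinP; exact: measurable_indic.
apply: leeD2l.
rewrite ge0_integralZl//; cycle 1.
all: try (by apply/measurable_EFinP; exact: measurable_indic).
all: try (by move=> x _; rewrite lee_fin).
all: try (by rewrite lee_fin).
rewrite integral_indic//; apply: lee_wpmul2l; first by rewrite lee_fin.
apply: (@le_trans _ _ (mu ((S `&` D) `\` [set z] `|` [set z]))).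
  apply: le_measure; rewrite ?inE.
  - exact: measurableI.
  - by apply: measurableU => //; apply: measurableD => //; exact: measurableI.
  - move=> x Sx; case: (eqVneq x z) => xz; [by right | left; split => //; exact/eqP].
apply: (le_trans (measureU2 _ _ _)) => //; first by apply: measurableD => //; exact: measurableI.
have mz : (mu [set z] = 0)%E by exact: lebesgue_measure_set1.
rewrite [X in (_ + X)%E](_ : _ = 0%E) ?adde0; last exact: lebesgue_measure_set1.
apply: mu_le => x [[Sx Dx] /eqP nxz].
apply: contrapT => nAx; have := fH x Dx nAx nxz.
move: Sx; rewrite /S /= in_itv /= andbT subr_gt0 => Hh.
by rewrite leNgt (lt_le_trans _ (hf' x Dx)) // lte_fin.
Qed.
End S.

Section B.
Context {R : realType}.
Notation mu := (@lebesgue_measure R).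

Lemma mu_le' (A B : set R) : A `<=` B -> (mu A <= mu B)%E.
Proof. move=> AB. exact: le_mu_ext. Qed.

Lemma partB (U : set (R * R)) (p q : R * R) (a : R) :
  (mu (dproj (segment p q) a `&` dproj U a) <=
   `|(q.1 - p.1) * cos a + (q.2 - p.2) * sin a|%:E)%E.
Proof.
set u := p.1 * cos a + p.2 * sin a.
set v := q.1 * cos a + q.2 * sin a.
have -> : (q.1 - p.1) * cos a + (q.2 - p.2) * sin a = v - u by rewrite /u /v; lra.
apply: (@le_trans _ _ (mu `[Num.min u v, Num.max u v])); first apply: mu_le'.
  move=> y [[pt [t t01 <-] <-] _].
  move: t01; rewrite /= !in_itv /= => /andP[t0 t1].
  have -> : ((1 - t) * p.1 + t * q.1) * cos a + ((1 - t) * p.2 + t * q.2) * sin a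
     = (1 - t) * u + t * v by rewrite /u /v; ring.
  case: (leP u v) => uv.
    by apply/andP; split; nra.
  by apply/andP; split; nra.
rewrite lebesgue_measure_itv /=.
case: ifPn => _; last by rewrite lee_fin.
rewrite -EFinD lee_fin.
case: (leP u v) => uv.
  by rewrite ger0_norm ?subr_ge0.
by rewrite ltr0_norm ?subr_lt0 // opprB.
Qed.
End B.

Section C.
Context {R : realType}.
Notation mu := (@lebesgue_measure R).

Definition psi (s t : R) : R := Num.max (`|cos t| - s) 0.
Definition Psi (s x : R) : R := (\int[mu]_(t in [set` `[-8, x]]) (psi s t))%R.

Lemma psi_cont s : continuous (psi s).
Proof.
move=> x; apply: (@continuous_max _ _ (fun x => `|cos x| - s) (fun=> 0)); last exact: cst_continuous.
apply: continuousB; last exact: cst_continuous.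
apply: continuous_comp; last exact: norm_continuous.
exact: continuous_cos.
Qed.

Lemma Psi_derive (s t : R) : -8 < t -> is_derive t 1 (Psi s) (psi s t).
Proof.
move=> t8.
have t1 : t < t + 1 by rewrite ltrDl.
have int : mu.-integrable `[-8, t + 1] (EFin \o psi s).
  apply: continuous_compact_integrable; first exact: segment_compact.
  by apply: continuous_subspaceT; exact: psi_cont.
have [d1 d2] := @continuous_FTC1_closed R (psi s) (-8) t (t + 1) t1 int t8 (psi_cont s t).
apply: DeriveDef => //.
by rewrite -derive1E.
Qed.

Lemma theta_ex (u1 u2 : R) : exists th : R,
  [/\ 0 <= th <= 2 * pi, u1 = Num.sqrt (u1^+2 + u2^+2) * cos th &
      u2 = Num.sqrt (u1^+2 + u2^+2) * sin th].
Proof.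
set r := Num.sqrt _.
have r0 : 0 <= r by exact: sqrtr_ge0.
have rr : r ^+ 2 = u1 ^+ 2 + u2 ^+ 2 by rewrite sqr_sqrtr// addr_ge0// sqr_ge0.
have pi0 := pi_gt0 R.
case: (eqVneq r 0) => [r0'|rn0].
  have h1 : u1 = 0 by move: rr; rewrite r0' expr0n /=; nra.
  have h2 : u2 = 0 by move: rr; rewrite r0' expr0n /=; nra.
  exists 0; split; first by apply/andP; split; lra.
  - by rewrite r0' mul0r.
  - by rewrite r0' mul0r.
have rp : 0 < r by rewrite lt_def rn0.
set x := u1 / r.
have x1 : -1 <= x <= 1.
  have : x ^+ 2 <= 1.
    rewrite /x expr_div_n ler_pdivrMr ?exprn_gt0// mul1r rr.
    by rewrite lerDl sqr_ge0.
  move=> hx; apply/andP; split; nra.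
have hc : r * cos (acos x) = u1.
  by rewrite acosK ?inE ?in_itv //= /x mulrC divfK.
have hs : Num.sqrt (1 - x ^+ 2) = `|u2| / r.
  have -> : 1 - x ^+ 2 = (u2 / r) ^+ 2.
    rewrite /x !expr_div_n; apply: (mulIf (_ : r ^+ 2 != 0)); first by rewrite expf_neq0.
    by rewrite mulrBl !divfK ?expf_neq0// mul1r rr; ring.
  by rewrite sqrtr_sqr normrM (ger0_norm (_ : 0 <= r^-1)) // invr_ge0.
have a0 := acos_ge0 x1; have api := acos_lepi x1.
case: (leP 0 u2) => u20.
  exists (acos x); split; first by apply/andP; split; lra.
  - by rewrite hc.
  - by rewrite sin_acos // hs ger0_norm // mulrC divfK.
exists (- acos x + pi *+ 2); split.
- by apply/andP; split; rewrite mulr2n; lra.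
- by rewrite cosD2pi cosN hc.
- by rewrite sinD2pi sinN sin_acos // hs ltr0_norm // mulrN mulrC divfK // opprK.
Qed.

Lemma G_derive (r s th x : R) : -8 < x - th ->
  is_derive x 1 (fun y => r * Psi s (y - th)) (r * psi s (x - th)).
Proof.
move=> hx.
have h1 : is_derive x 1 (fun y : R => y - th) 1.
  by apply: trigger_derive; rewrite subr0.
have h2 : is_derive x 1 (Psi s \o (fun y : R => y - th)) (psi s (x - th) * 1).
  exact: (@is_derive1_comp R (Psi s) (fun y => y - th) x _ _ (Psi_derive s (x - th) hx) h1).
rewrite mulr1 in h2.
have := @is_deriveZ R R R _ r x 1 _ h2.
by [].
Qed.

Lemma pi_lt4 : pi < 4 :> R.
Proof. have := @pihalf_lt2 R; lra. Qed.

Lemma G_cont (r s th x : R) : -8 < x - th ->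
  {for x, continuous (fun y => r * Psi s (y - th))}.
Proof.
move=> hx; apply/differentiable_continuous/derivable1_diffP.
exact: (@ex_derive _ _ _ _ _ _ _ (G_derive r s th x hx)).
Qed.

Lemma int_shift (r s th : R) : 0 <= th <= 2 * pi ->
 (\int[mu]_(x in `[0%R, (2 * pi)%R]) (r * psi s (x - th))%:E =
   (r * Psi s (2 * pi - th))%:E - (r * Psi s (0 - th))%:E)%E.
Proof.
move=> /andP[th0 th2].
have pi4 := pi_lt4; have pi0 := pi_gt0 R.
have hx x : 0 <= x -> -8 < x - th by move=> x0; lra.
apply: (continuous_FTC2 (F := fun y => r * Psi s (y - th))).
- lra.
- apply: continuous_subspaceT => x.
  apply: (@continuousM _ _ (fun=> r) (fun y => psi s (y - th))); first exact: cst_continuous.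
  apply: (@continuous_comp _ _ _ (fun y => y - th) (psi s)); last exact: psi_cont.
  by apply: (@continuousB _ _ _ idfun (fun=> th)); [exact: cvg_id|exact: cst_continuous].
- split.
  + move=> x; rewrite in_itv /= => /andP[x0 _].
    exact: (@ex_derive _ _ _ _ _ _ _ (G_derive r s th x (hx x (ltW x0)))).
  + by apply: cvg_at_right_filter; apply: G_cont; apply: hx.
  + by apply: cvg_at_left_filter; apply: G_cont; apply: hx; lra.
- move=> x; rewrite in_itv /= => /andP[x0 _].
  by rewrite derive1E; exact: (@derive_val _ _ _ _ _ _ _ (G_derive r s th x (hx x (ltW x0)))).
Qed.

Lemma psi_per (s t : R) : psi s (t + pi *+ 2) = psi s t.
Proof. by rewrite /psi cosD2pi. Qed.

Lemma Psi_cont (s x : R) : -8 < x -> {for x, continuous (Psi s)}.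
Proof.
move=> hx; apply/differentiable_continuous/derivable1_diffP.
exact: (@ex_derive _ _ _ _ _ _ _ (Psi_derive s x hx)).
Qed.

Lemma Psi_per (s th : R) : 0 <= th <= 2 * pi ->
  Psi s (2 * pi - th) - Psi s (0 - th) = Psi s (2 * pi) - Psi s 0.
Proof.
move=> /andP[th0 th2].
have pi4 := pi_lt4; have pi0 := pi_gt0 R.
pose c : R := pi *+ 2.
have cE : c = 2 * pi by rewrite /c mulr2n; ring.
pose g : R -> R := fun y => Psi s (y + c) - Psi s y.
have gd (x : R) : -8 < x -> is_derive x 1 g 0.
  move=> hx.
  have h1 : is_derive x 1 (fun y => Psi s (y + c)) (psi s (x + c)).
    have hc : is_derive x 1 (fun y : R => y + c) 1.
      by apply: trigger_derive; rewrite addr0.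
    have hxc : -8 < x + c by rewrite cE; lra.
    have := (@is_derive1_comp R (Psi s) (fun y => y + c) x _ _ (Psi_derive s (x + c) hxc) hc).
    by rewrite mulr1.
  have := is_deriveB h1 (Psi_derive s x hx).
  by rewrite /c psi_per subrr.
have := @MVT_segment R g (fun=> 0) (- th) 0 _ _ _.
case.
- by rewrite oppr_le0.
- move=> x; rewrite in_itv /= => /andP[x0 _]; apply: gd; lra.
- apply: continuous_in_subspaceT => x; rewrite inE /= in_itv /= => /andP[x0 _].
  apply/differentiable_continuous/derivable1_diffP.
  by apply: (@ex_derive _ _ _ _ _ _ _ (gd x _)); lra.
move=> y _; rewrite mul0r => /eqP; rewrite subr_eq0 => /eqP.
rewrite /g /= add0r sub0r cE => ->.
by rewrite [- th + _]addrC ?sub0r.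
Qed.

Lemma piece (s a b : R) (F dF : R -> R) : -8 < a -> a <= b ->
  (forall x : R, is_derive x 1 F (dF x)) -> (forall x, a < x < b -> psi s x = dF x) ->
  Psi s b - Psi s a = F b - F a.
Proof.
move=> a8 ab dFF hp.
pose h : R -> R := fun y => Psi s y - F y.
have := @MVT_segment R h (fun=> 0) a b ab _ _.
case.
- move=> x; rewrite in_itv /= => /andP[ax xb].
  have := is_deriveB (Psi_derive s x _) (dFF x); rewrite hp ?ax ?xb// subrr; apply; lra.
- apply: continuous_in_subspaceT => x; rewrite inE /= in_itv /= => /andP[ax _].
  have hx : -8 < x by lra.
  apply/differentiable_continuous/derivable1_diffP.
  exact: (@ex_derive _ _ _ _ _ _ _ (is_deriveB (Psi_derive s x hx) (dFF x))).
move=> y _; rewrite mul0r => /eqP; rewrite subr_eq0 => /eqP.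
rewrite /h => E; lra.
Qed.

Lemma cosw (e : R) : cos (pi / 2 - e) = sin e.
Proof. by rewrite -cosN opprB cosBpihalf. Qed.

Lemma cosw' (e : R) : cos (e + pi / 2) = - sin e.
Proof. by rewrite cosDpihalf. Qed.

Lemma L1 (e y : R) : 0 <= e <= pi / 2 -> `|y| <= pi / 2 - e -> sin e <= cos y.
Proof.
move=> /andP[e0 e2] hy; have pi0 := pi_gt0 R.
rewrite -cos_norm -(cosw e) leNgt ltr_cos ?in_itv /= -?leNgt //; apply/andP; split; rewrite ?normr_ge0 //; lra.
Qed.

Lemma L2 (e y : R) : 0 <= e <= pi / 2 -> pi / 2 - e <= `|y| <= e + pi / 2 ->
  `|cos y| <= sin e.
Proof.
move=> /andP[e0 e2] /andP[h1 h2]; have pi0 := pi_gt0 R.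
have yi : `|y| \in `[0, pi] by rewrite in_itv /= normr_ge0 /=; lra.
rewrite ler_norml -cos_norm; apply/andP; split.
- rewrite -cosw' leNgt ltr_cos ?in_itv /= -?leNgt //.
  by apply/andP; split; lra.
- rewrite -(cosw e) leNgt ltr_cos ?in_itv /= -?leNgt //.
  by apply/andP; split; lra.
Qed.

Lemma P1 (e y : R) : 0 <= e <= pi / 2 -> `|y| <= pi / 2 - e -> psi (sin e) y = cos y - sin e.
Proof.
move=> he hy; have h := @L1 e y he hy.
have s0 : 0 <= sin e.
  by apply: sin_ge0_pi; case/andP: he => e0 e2; have pi0 := pi_gt0 R; apply/andP; split; lra.
rewrite /psi ger0_norm; last by apply: le_trans h.
by apply/max_idPl; rewrite subr_ge0.
Qed.

Lemma P2 (e y : R) : 0 <= e <= pi / 2 -> pi / 2 - e <= `|y| <= e + pi / 2 ->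
  psi (sin e) y = 0.
Proof.
move=> he hy; have h := @L2 e y he hy.
by rewrite /psi; apply/max_idPr; rewrite subr_le0.
Qed.

Lemma psiDpi (s y : R) : psi s y = psi s (y - pi).
Proof.
rewrite /psi; have := cosDpi (y - pi); rewrite subrK => ->.
by rewrite normrN.
Qed.

Lemma psiD2pi (s y : R) : psi s y = psi s (y - pi *+ 2).
Proof. by rewrite -(psi_per s (y - _)) subrK. Qed.

Lemma Psi_full (e : R) : 0 <= e <= pi / 2 ->
  Psi (sin e) (2 * pi) - Psi (sin e) 0 = 4 * cos e - (2 * pi - 4 * e) * sin e.
Proof.
move=> he; have /andP[e0 e2] := he; have pi0 := pi_gt0 R; have pi4 := @pi_lt4.
set s := sin e; set w := pi / 2 - e.
have wE : w = pi / 2 - e by [].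
have p2E : (pi : R) *+ 2 = 2 * pi by rewrite mulr2n; ring.
pose F1 : R -> R := fun x => sin x - s * x.
pose F3 : R -> R := fun x => - sin x - s * x.
pose F0 : R -> R := fun=> 0.
have d1 (x : R) : is_derive x 1 F1 (cos x - s).
  by apply: trigger_derive; rewrite /GRing.scale /=; ring.
have d3 (x : R) : is_derive x 1 F3 (- cos x - s).
  by apply: trigger_derive; rewrite /GRing.scale /=; ring.
have d0 (x : R) : is_derive x 1 F0 0 by exact: is_derive_cst.
have cpi (x : R) : cos (x - pi) = - cos x.
  by have := cosDpi (x - pi); rewrite subrK => ->; rewrite opprK.
have c2pi (x : R) : cos (x - pi *+ 2) = cos x by rewrite -(cosD2pi (x - _)) subrK.
have h1 : Psi s w - Psi s 0 = F1 w - F1 0.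
  apply: piece; try lra; try exact: d1.
  move=> x /andP[x0 xw]; apply: P1 => //; rewrite ger0_norm; lra.
have h2 : Psi s (pi - w) - Psi s w = F0 (pi - w) - F0 w.
  apply: piece; try lra; try exact: d0.
  move=> x /andP[x0 xw]; apply: P2 => //; rewrite ger0_norm; [apply/andP; split|]; lra.
have h3 : Psi s (pi + w) - Psi s (pi - w) = F3 (pi + w) - F3 (pi - w).
  apply: piece; try lra; try exact: d3.
  move=> x /andP[x0 xw]; rewrite psiDpi P1 ?cpi //.
  by rewrite ler_norml; apply/andP; split; lra.
have h4 : Psi s (2 * pi - w) - Psi s (pi + w) = F0 (2 * pi - w) - F0 (pi + w).
  apply: piece; try lra; try exact: d0.
  move=> x /andP[x0 xw]; rewrite psiDpi; apply: P2 => //; rewrite ger0_norm; [apply/andP; split|]; lra.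
have h5 : Psi s (2 * pi) - Psi s (2 * pi - w) = F1 (2 * pi) - F1 (2 * pi - w).
  apply: piece; try lra; try exact: d1.
  move=> x /andP[x0 xw]; rewrite psiD2pi P1 ?c2pi //.
  by rewrite p2E ler0_norm; lra.
have sw : sin w = cos e by rewrite /w -opprB sinN sinBpihalf opprK.
have s3 : sin (pi - w) = cos e.
  by rewrite (_ : pi - w = e + pi / 2) ?sinDpihalf // /w; lra.
have s4 : sin (pi + w) = - cos e by rewrite addrC sinDpi sw.
have s5 : sin (2 * pi - w) = - cos e by rewrite -p2E addrC sinD2pi sinN sw.
have s6 : sin (2 * pi) = 0 :> R by rewrite -p2E sin2pi.
have -> : Psi s (2 * pi) - Psi s 0 = (Psi s w - Psi s 0) + (Psi s (pi - w) - Psi s w) +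
  (Psi s (pi + w) - Psi s (pi - w)) + (Psi s (2 * pi - w) - Psi s (pi + w)) +
  (Psi s (2 * pi) - Psi s (2 * pi - w)) by ring.
rewrite h1 h2 h3 h4 h5 /F1 /F3 /F0 sw s3 s4 s5 s6 sin0 /w; by field.
Qed.

Lemma partC (u1 u2 eps : R) : 0 <= eps -> eps <= pi/2 ->
  (\int[mu]_(x in `[0%R, (2 * pi)%R]) (Num.max (`|u1 * cos x + u2 * sin x| - Num.sqrt (u1^+2 + u2^+2) * sin eps) 0)%:E
   <= (Num.sqrt (u1^+2+u2^+2) * (4 * cos eps - (2*pi - 4*eps) * sin eps))%:E)%E.
Proof.
move=> e0 e2.
have [th [hth e1 e2']] := theta_ex u1 u2.
set r := Num.sqrt _ in e1 e2' *.
have r0 : 0 <= r by exact: sqrtr_ge0.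
have -> : (\int[mu]_(x in `[0%R, (2 * pi)%R]) (Num.max (`|u1 * cos x + u2 * sin x| - r * sin eps) 0)%:E
   = \int[mu]_(x in `[0%R, (2 * pi)%R]) (r * psi (sin eps) (x - th))%:E)%E.
  apply: eq_integral => x _; congr (_%:E).
  rewrite /psi maxr_pMr // mulr0 mulrBr; congr (Num.max (_ - _) _).
  rewrite cosB {1}e1 {1}e2' -(ger0_norm r0) -normrM; congr `|_|; rewrite ger0_norm //; ring.
rewrite int_shift // -EFinB lee_fin -mulrBr Psi_per // Psi_full //.
by apply/andP; split.
Qed.
End C.

Section H.
Context {R : realType}.
Lemma contH (u1 u2 k : R) :
  continuous (fun x : R => Num.max (`|u1 * cos x + u2 * sin x| - k) 0).
Proof.
move=> x; apply: (@continuous_max _ _ (fun x => `|u1 * cos x + u2 * sin x| - k) (fun=> 0)); last exact: cst_continuous.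
apply: continuousB; last exact: cst_continuous.
apply: continuous_comp; last exact: norm_continuous.
apply: continuousD; apply: continuousM; (try exact: cst_continuous);
  [exact: continuous_cos | exact: continuous_sin].
Qed.
End H.
End Helpers.

Theorem lemma4 (R : realType) (U : set (R * R)) (p q : R * R) (eps : R) :
  convex2 U ->
  segment p q `&` U = set0 ->
  0 <= eps ->
  (lebesgue_measure
     [set a : R | (0 <= a < 2 * pi)%R /\ dproj U a `&` dproj (segment p q) a !=set0]
   <= (2 * pi - 4 * eps)%:E)%E ->
  (\int[lebesgue_measure]_(a in `[0%R, (2 * pi)%R]%classic)
      lebesgue_measure (dproj (segment p q) a `&` dproj U a)
   <= (4 * seglen p q * cos eps)%:E)%E.
Proof.
move=> _ _ eps0 hA.
set A := [set a : R | _] in hA.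
set u1 := q.1 - p.1; set u2 := q.2 - p.2.
have -> : seglen p q = Num.sqrt (u1^+2 + u2^+2) by [].
set r := Num.sqrt _.
set s := sin eps.
have epspi : eps <= pi / 2.
  have := le_trans (measure_ge0 lebesgue_measure A) hA; rewrite lee_fin; lra.
have s0 : 0 <= s by apply: sin_ge0_pi; apply/andP; split => //; have := pi_gt0 R; lra.
have r0 : 0 <= r by exact: sqrtr_ge0.
set H := fun x : R => Num.max (`|u1 * cos x + u2 * sin x| - r * s) 0.
apply: le_trans (@Helpers.partA _ _ H A _ (r * s) (2 * pi) _ _ _ _ _ _ _) _.
- exact: measurable_itv.
- exact: mulr_ge0.
- by move=> x; rewrite /H le_max lexx orbT.
- by apply: measurable_realfun.continuous_measurable_fun; exact: Helpers.contH.
- by move=> x; exact: measure_ge0.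
- move=> x _; apply: le_trans (Helpers.partB U p q x) _; rewrite lee_fin /H.
  set y := `|_|; case: (leP (y - r * s) 0) => ?; rewrite ?(max_idPr _) ?(max_idPl _) //; try lra.
- move=> x Dx nAx nx2.
  have -> : dproj (segment p q) x `&` dproj U x = set0.
    apply: contrapT => /eqP/set0P ne; apply: nAx; split; last by rewrite setIC.
    move: Dx; rewrite /= in_itv /= => /andP[-> ]; rewrite le_eqVlt (negbTE nx2) //.
  by rewrite measure0 lee_fin /H le_max lexx orbT.
apply: le_trans.
  apply: leeD; first exact: (Helpers.partC u1 u2 eps eps0 epspi).
  apply: lee_wpmul2l; last exact: hA.
  by rewrite lee_fin mulr_ge0.
rewrite -EFinM -EFinD lee_fin.
have -> : 4 * r * cos eps = r * (4 * cos eps) by ring.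
rewrite -/r /s; rewrite le_eqVlt; apply/orP; left; apply/eqP; ring.
Qed.
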